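(* Let $n,p,q,c,d$ be nonnegative integers. Then \[ \sum_{k=0}^n \binom{p+k}{p}\binom{q+n-k}{q}\binom{k}{c}\binom{n-k}{d}H_{p+k} = \binom{n+p+q+1}{n-c-d}\binom{p+c}{c}\binom{q+d}{d}\bigl(H_{n+p+q+1}-H_{p+q+c+d+1}+H_{p+c}\bigr). \]
   Context: For a nonnegative integer $N$, $H_N=\sum_{j=1}^N \frac1j$ (so $H_0=0$). For integers $r$ and $j$, $\binom{r}{j}=\frac{r(r-1)\cdots(r-j+1)}{j!}$ if $j\ge 0$ and $\binom{r}{j}=0$ if $j<0$. *)

(* Defs.v *)
From mathcomp Require Import all_boot all_order all_algebra.
Set Implicit Arguments. Unset Strict Implicit. Unset Printing Implicit Defensive.
Import Order.TTheory GRing.Theory Num.Theory.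
Local Open Scope ring_scope.

Definition harm (N : nat) : rat := \sum_(1 <= j < N.+1) (j%:R)^-1.

Definition binz (r : nat) (j : int) : nat :=
  match j with
  | Posz m => 'C(r, m)
  | Negz _ => 0%N
  end.

(* Main.v *)
Require Import Defs.
From mathcomp Require Import all_boot all_order all_algebra.
From mathcomp Require Import ring lra zify.
Import Order.TTheory GRing.Theory Num.Theory.
Local Open Scope ring_scope.

Lemma harmS n : harm n.+1 = harm n + (n.+1%:R)^-1.
Proof. by rewrite /harm big_nat_recr. Qed.

Lemma harm0 : harm 0 = 0.
Proof. by rewrite /harm big_geq. Qed.

Lemma keyq (M J : nat) :
  (('C(M.+1, J.+1) + 'C(M.+1, J))%:R : rat) * (M.+2%:R)^-1
  = ('C(M.+1, J))%:R * (J.+1%:R)^-1.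
Proof.
have h := mul_bin_diag M.+2 J; rewrite /= binS in h.
have /(congr1 (fun n : nat => (n%:R : rat))) := h.
rewrite !natrM => h'.
have e : (('C(M.+1, J.+1) + 'C(M.+1, J))%:R : rat) = M.+2%:R * 'C(M.+1, J)%:R / J.+1%:R.
  by rewrite h' mulrC mulKf // pnatr_eq0.
rewrite e; field; apply/andP; split; apply/eqP; have := ler0n rat J; have := ler0n rat M; lra.
Qed.

Lemma gen (A : nat) : forall M B,
  \sum_(0 <= m < M.+1) (('C(m, A) * 'C(M - m, B))%:R * harm m)
  = ('C(M.+1, A + B + 1))%:R * (harm M.+1 - harm (A + B + 1) + harm A).
Proof.
elim=> [|M IH] B.
  rewrite big_nat1 harm0 mulr0.
  have [h|h] : (A + B = 0)%N \/ (0 < A + B)%N by lia.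
    have hA : A = 0%N by lia.
    by rewrite h hA /= subrr add0r harm0 mulr0.
  by rewrite bin_small ?mul0r //; lia.
case: B => [|B].
  rewrite big_nat_recr //= subnn bin0 muln1.
  rewrite (eq_bigr (fun m => ('C(m, A) * 'C(M - m, 0))%:R * harm m)); last first.
    by move=> m _; rewrite !bin0.
  rewrite IH.
  rewrite !addn0 addn1 (binS M.+1 A) (harmS M.+1) (harmS A) natrD.
  have k := keyq M A.
  apply/eqP; rewrite -subr_eq0; apply/eqP.
  set x := 'C(M.+1, A.+1)%:R; set y := 'C(M.+1, A)%:R.
  rewrite natrD -/x -/y in k.
  transitivity (y * (A.+1%:R)^-1 - (x + y) * (M.+2%:R)^-1); first by ring.
  by rewrite k subrr.
rewrite big_nat_recr //= subnn bin0n /= muln0 mul0r addr0.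
rewrite (eq_big_nat _ _ (F2 := fun m => ('C(m, A) * 'C(M - m, B.+1))%:R * harm m
    + ('C(m, A) * 'C(M - m, B))%:R * harm m)); last first.
  move=> m /andP [_ hm]; rewrite subSn // binS mulnDr natrD mulrDl //.
rewrite big_split /= !IH.
have e1 : (A + B.+1 + 1 = (A + B + 1).+1)%N by lia.
rewrite e1 (binS M.+1 (A + B + 1)) (harmS M.+1) (harmS (A + B + 1)) natrD.
set J := (A + B + 1)%N.
have k := keyq M J.
apply/eqP; rewrite -subr_eq0; apply/eqP.
set x := 'C(M.+1, J.+1)%:R; set y := 'C(M.+1, J)%:R.
rewrite natrD -/x -/y in k.
transitivity (y * (J.+1%:R)^-1 - (x + y) * (M.+2%:R)^-1); first by ring.
by rewrite k subrr.
Qed.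
Lemma binmul (p k c : nat) : ('C(p + k, p) * 'C(k, c) = 'C(p + c, c) * 'C(p + k, p + c))%N.
Proof.
have [lt|le] := ltnP k c.
  rewrite (bin_small lt) (@bin_small (p + k) (p + c)) ?muln0 //; lia.
have h1 := bin_fact (leq_addr k p); rewrite addKn in h1.
have h2 := bin_fact le.
have h3 := bin_fact (leq_addl p c); rewrite addnK in h3.
have hl : (p + c <= p + k)%N by rewrite leq_add2l.
have h4 := bin_fact hl; rewrite subnDl in h4.
have hpos : (0 < p`! * c`! * (k - c)`!)%N by rewrite !muln_gt0 !fact_gt0.
apply/eqP; rewrite -(eqn_pmul2r hpos).
apply/eqP.
transitivity ('C(p + k, p) * (p`! * ('C(k, c) * (c`! * (k - c)`!))))%N; first by rewrite !mulnA; ring.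
rewrite h2 h1 -h4 -h3; ring.
Qed.

Lemma reindex (n p q P Q : nat) : (p <= P)%N -> (q <= Q)%N ->
  \sum_(0 <= k < n.+1) (('C(p + k, P) * 'C(q + (n - k), Q))%:R * harm (p + k))
  = \sum_(0 <= m < (n + p + q).+1) (('C(m, P) * 'C(n + p + q - m, Q))%:R * harm m).
Proof.
move=> hP hQ.
set F := (fun m => ('C(m, P) * 'C(n + p + q - m, Q))%:R * harm m).
have z1 : \sum_(0 <= i < p) F i = 0.
  rewrite big1_seq // => m; rewrite mem_index_iota => /andP [_ hm].
  by rewrite /F bin_small ?mul0n ?mul0r //; lia.
have z3 : \sum_(p + n.+1 <= i < (n + p + q).+1) F i = 0.
  rewrite big1_seq // => m; rewrite mem_index_iota => /andP [h1 h2].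
  by rewrite /F (@bin_small _ Q) ?muln0 ?mul0r //; lia.
rewrite [RHS](@big_cat_nat _ _ _ p) /=; [|lia|lia].
rewrite [X in _ = _ + X](@big_cat_nat _ _ _ (p + n.+1) p) /=; [|lia|lia].
rewrite z1 z3 add0r addr0 /F.
rewrite [RHS](big_addn 0 _ p) (_ : p + n.+1 - p = n.+1)%N; last by lia.
apply: eq_big_nat => k /andP [_ hk].
have -> : (n + p + q - (k + p) = q + (n - k))%N by lia.
by rewrite addnC.
Qed.

Theorem mainTheorem4 (n p q c d : nat) :
  \sum_(0 <= k < n.+1)
     ('C(p + k, p) * 'C(q + (n - k), q) * 'C(k, c) * 'C(n - k, d))%:R
       * harm (p + k)
  = (binz (n + p + q + 1) (n%:Z - c%:Z - d%:Z) * 'C(p + c, c) * 'C(q + d, d))%:R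
      * (harm (n + p + q + 1) - harm (p + q + c + d + 1) + harm (p + c)).
Proof.
rewrite (eq_big_nat _ _ (F2 := fun k => ('C(p + c, c) * 'C(q + d, d))%:R *
   (('C(p + k, p + c) * 'C(q + (n - k), q + d))%:R * harm (p + k)))); last first.
  move=> k _; rewrite mulrA -natrM; congr (_%:R * _).
  transitivity (('C(p + k, p) * 'C(k, c)) * ('C(q + (n - k), q) * 'C(n - k, d)))%N; first by ring.
  rewrite binmul binmul; ring.
rewrite -mulr_sumr reindex ?leq_addr // gen.
have eK : (p + c + (q + d) + 1 = p + q + c + d + 1)%N by lia.
rewrite eK mulrA -natrM !addn1.
case E: (n%:Z - c%:Z - d%:Z) => [m|m] /=.
  have -> : m = ((n + p + q).+1 - (p + q + c + d).+1)%N by lia.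
  rewrite bin_sub; last by lia.
  by rewrite mulnC mulnA.
have hneg : (n%:Z - c%:Z - d%:Z < 0) by rewrite E.
rewrite mul0n mul0r (@bin_small (n + p + q).+1 (p + q + c + d).+1) ?muln0 ?mul0r //; lia.
Qed.
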